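(* If $2\mu\bar c\le\sigma^2 r$, define $g(x)=\frac{\bar c}{r}(1-e^{-\gamma x})$ for $x\ge0$. If $2\mu\bar c>\sigma^2 r$, then there is a unique $y_0>0$ such that $k_1e^{-\lambda_1y_0}-k_2e^{\lambda_2y_0}+\frac{b\bar c}{r}=0$, and define $$g(x)=\begin{cases}k_1e^{\lambda_1(x-y_0)}-k_2e^{-\lambda_2(x-y_0)}+\frac{b\bar c}{r}, & 0\le x\le y_0,\\[1mm] -\frac1\gamma e^{-\gamma(x-y_0)}+\frac{\bar c}{r}, & x>y_0.\end{cases}$$ In both cases $g\in C^2([0,\infty))$ satisfies $-\mathcal Lg-\bar c\,\mathcal Tg=0$ on $[0,\infty)$ and $g(0)=0$; moreover $0\le g\le \bar c/r$, $0\le g'\le g'(0)<\infty$, and $g'$ is strictly decreasing on $[0,\infty)$ (so $g$ is strictly concave). In the second case $g'(y_0)=1$.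
   Context: Constants: $\mu\in\mathbb R$, $\sigma>0$, $r>0$, $\bar c\in(0,\mu]$, $b\in[0,1]$. Operators: $\mathcal L v=\tfrac12\sigma^2v''+\mu v'-rv$, $\mathcal T v=b(1-v')+(1-b)(1-v')^+$. Parameters: $\gamma=\frac{\sqrt{(\mu-\bar c)^2+2\sigma^2 r}+(\mu-\bar c)}{\sigma^2}$, $\lambda_{1}=\frac{\sqrt{(\mu-b\bar c)^2+2\sigma^2 r}-(\mu-b\bar c)}{\sigma^2}$, $\lambda_{2}=\frac{\sqrt{(\mu-b\bar c)^2+2\sigma^2 r}+(\mu-b\bar c)}{\sigma^2}$, $k_1=\frac{1}{\lambda_1+\lambda_2}\big[1+\lambda_2\big(\frac{(1-b)\bar c}{r}-\frac1\gamma\big)\big]$, $k_2=\frac{1}{\lambda_1+\lambda_2}\big[1-\lambda_1\big(\frac{(1-b)\bar c}{r}-\frac1\gamma\big)\big]$. *)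

(* Defs.v *)
From Stdlib Require Import Reals.
From Coquelicot Require Import Coquelicot.
Open Scope R_scope.

Definition gam (mu sigma r cbar : R) : R :=
  (sqrt ((mu - cbar)^2 + 2 * sigma^2 * r) + (mu - cbar)) / sigma^2.
Definition lam1 (mu sigma r cbar b : R) : R :=
  (sqrt ((mu - b * cbar)^2 + 2 * sigma^2 * r) - (mu - b * cbar)) / sigma^2.
Definition lam2 (mu sigma r cbar b : R) : R :=
  (sqrt ((mu - b * cbar)^2 + 2 * sigma^2 * r) + (mu - b * cbar)) / sigma^2.
Definition kk1 (mu sigma r cbar b : R) : R :=
  / (lam1 mu sigma r cbar b + lam2 mu sigma r cbar b) *
  (1 + lam2 mu sigma r cbar b * ((1 - b) * cbar / r - / gam mu sigma r cbar)).
Definition kk2 (mu sigma r cbar b : R) : R :=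
  / (lam1 mu sigma r cbar b + lam2 mu sigma r cbar b) *
  (1 - lam1 mu sigma r cbar b * ((1 - b) * cbar / r - / gam mu sigma r cbar)).

Definition opL (mu sigma r : R) (v : R -> R) (x : R) : R :=
  / 2 * sigma^2 * Derive (Derive v) x + mu * Derive v x - r * v x.
Definition opT (b : R) (v : R -> R) (x : R) : R :=
  b * (1 - Derive v x) + (1 - b) * Rmax 0 (1 - Derive v x).

Definition g_case1 (mu sigma r cbar : R) (x : R) : R :=
  cbar / r * (1 - exp (- gam mu sigma r cbar * x)).

(* g in the case 2 mu cbar > sigma^2 r, given y0; the first branch is used
   for all x <= y0 (this also gives the natural extension to x < 0). *)
Definition g_case2 (mu sigma r cbar b y0 : R) (x : R) : R :=
  if Rle_dec x y0 then
    kk1 mu sigma r cbar b * exp (lam1 mu sigma r cbar b * (x - y0))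
    - kk2 mu sigma r cbar b * exp (- lam2 mu sigma r cbar b * (x - y0))
    + b * cbar / r
  else - / gam mu sigma r cbar * exp (- gam mu sigma r cbar * (x - y0)) + cbar / r.

Definition y0_eq (mu sigma r cbar b y0 : R) : Prop :=
  kk1 mu sigma r cbar b * exp (- lam1 mu sigma r cbar b * y0)
  - kk2 mu sigma r cbar b * exp (lam2 mu sigma r cbar b * y0) + b * cbar / r = 0.

(* g is C^2 on [0, oo) (two-sided derivatives of the function as defined on R) *)
Definition C2_nonneg (g : R -> R) : Prop :=
  forall x, 0 <= x ->
    ex_derive g x /\ ex_derive (Derive g) x /\ continuous (Derive (Derive g)) x.

Definition good_g (mu sigma r cbar b : R) (g : R -> R) : Prop :=
  C2_nonneg g /\
  (forall x, 0 <= x -> - opL mu sigma r g x - cbar * opT b g x = 0) /\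
  g 0 = 0 /\
  (forall x, 0 <= x -> 0 <= g x <= cbar / r) /\
  (forall x, 0 <= x -> 0 <= Derive g x <= Derive g 0) /\
  (forall x y, 0 <= x -> x < y -> Derive g y < Derive g x).

(* Main.v *)
Require Import Defs.
From Stdlib Require Import Reals Lra Psatz FunctionalExtensionality.
From Coquelicot Require Import Coquelicot.
Open Scope R_scope.

Definition pw (a : R) (f1 f2 : R -> R) (x : R) : R :=
  if Rle_dec x a then f1 x else f2 x.

Lemma glue_derive (a : R) (f1 f2 d1 d2 : R -> R) :
  (forall x, is_derive f1 x (d1 x)) -> (forall x, is_derive f2 x (d2 x)) ->
  f1 a = f2 a -> d1 a = d2 a ->
  forall x, is_derive (pw a f1 f2) x (pw a d1 d2 x).
Proof.
  intros H1 H2 Hf Hd x. apply is_derive_Reals. intros eps Heps.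
  destruct (Rtotal_order x a) as [Hx|[Hx|Hx]].
  - destruct (proj1 (is_derive_Reals _ _ _) (H1 x) eps Heps) as [d Hd1].
    assert (Hp : 0 < Rmin d (a - x)) by (apply Rmin_pos; [apply cond_pos|lra]).
    exists (mkposreal _ Hp). intros h Hh0 Hh. simpl in Hh.
    assert (Hm1 := Rmin_l d (a-x)). assert (Hm2 := Rmin_r d (a-x)).
    unfold pw. destruct (Rle_dec (x+h) a) as [_|C]; [|exfalso; apply C; apply Rabs_def2 in Hh; lra].
    destruct (Rle_dec x a) as [_|C]; [|lra].
    apply Hd1; auto; lra.
  - subst x.
    destruct (proj1 (is_derive_Reals _ _ _) (H1 a) eps Heps) as [d Hd1].
    destruct (proj1 (is_derive_Reals _ _ _) (H2 a) eps Heps) as [d' Hd2].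
    assert (Hp : 0 < Rmin d d') by (apply Rmin_pos; apply cond_pos).
    exists (mkposreal _ Hp). intros h Hh0 Hh. simpl in Hh.
    assert (Hm1 := Rmin_l d d'). assert (Hm2 := Rmin_r d d').
    unfold pw. destruct (Rle_dec a a) as [_|C]; [|lra].
    destruct (Rle_dec (a+h) a).
    + apply Hd1; auto; lra.
    + rewrite Hf, Hd. apply Hd2; auto; lra.
  - destruct (proj1 (is_derive_Reals _ _ _) (H2 x) eps Heps) as [d Hd1].
    assert (Hp : 0 < Rmin d (x - a)) by (apply Rmin_pos; [apply cond_pos|lra]).
    exists (mkposreal _ Hp). intros h Hh0 Hh. simpl in Hh.
    assert (Hm1 := Rmin_l d (x-a)). assert (Hm2 := Rmin_r d (x-a)).
    unfold pw. destruct (Rle_dec (x+h) a) as [C|_]; [exfalso; apply Rabs_def2 in Hh; lra|].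
    destruct (Rle_dec x a) as [C|_]; [lra|].
    apply Hd1; auto; lra.
Qed.

Lemma cpt_elim f x : continuity_pt f x -> forall eps, 0 < eps ->
  exists d, 0 < d /\ forall y, Rabs (y - x) < d -> Rabs (f y - f x) < eps.
Proof.
  intros H eps He. destruct (H eps He) as [d [Hd Hy]]. exists d. split; auto.
  intros y Hyx. destruct (Req_dec y x) as [->|Hne].
  - rewrite Rminus_diag, Rabs_R0. lra.
  - apply (Hy y). split; [split; [exact I| auto]|]. exact Hyx.
Qed.

Lemma cpt_intro f x : (forall eps, 0 < eps ->
  exists d, 0 < d /\ forall y, Rabs (y - x) < d -> Rabs (f y - f x) < eps) ->
  continuity_pt f x.
Proof.
  intros H eps He. destruct (H eps He) as [d [Hd Hy]]. exists d. split; auto.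
  intros y [_ Hyx]. apply Hy. exact Hyx.
Qed.

Lemma glue_cont (a : R) (f1 f2 : R -> R) :
  (forall x, continuity_pt f1 x) -> (forall x, continuity_pt f2 x) ->
  f1 a = f2 a -> forall x, continuity_pt (pw a f1 f2) x.
Proof.
  intros H1 H2 Hf x. apply cpt_intro. intros eps Heps.
  destruct (Rtotal_order x a) as [Hx|[Hx|Hx]].
  - destruct (cpt_elim _ _ (H1 x) eps Heps) as [d [Hdp Hd1]].
    exists (Rmin d (a - x)). split; [apply Rmin_pos; lra|].
    intros y Hy.
    assert (Hm1 := Rmin_l d (a-x)). assert (Hm2 := Rmin_r d (a-x)).
    unfold pw. destruct (Rle_dec y a) as [_|C]; [|exfalso; apply C; apply Rabs_def2 in Hy; lra].
    destruct (Rle_dec x a) as [_|C]; [|lra].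
    apply Hd1. lra.
  - subst x.
    destruct (cpt_elim _ _ (H1 a) eps Heps) as [d [Hdp Hd1]].
    destruct (cpt_elim _ _ (H2 a) eps Heps) as [d' [Hdp' Hd2]].
    exists (Rmin d d'). split; [apply Rmin_pos; lra|].
    intros y Hy.
    assert (Hm1 := Rmin_l d d'). assert (Hm2 := Rmin_r d d').
    unfold pw. destruct (Rle_dec a a) as [_|C]; [|lra].
    destruct (Rle_dec y a).
    + apply Hd1. lra.
    + rewrite Hf. apply Hd2. lra.
  - destruct (cpt_elim _ _ (H2 x) eps Heps) as [d [Hdp Hd1]].
    exists (Rmin d (x - a)). split; [apply Rmin_pos; lra|].
    intros y Hy.
    assert (Hm1 := Rmin_l d (x-a)). assert (Hm2 := Rmin_r d (x-a)).
    unfold pw. destruct (Rle_dec y a) as [C|_]; [exfalso; apply Rabs_def2 in Hy; lra|].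
    destruct (Rle_dec x a) as [C|_]; [lra|].
    apply Hd1. lra.
Qed.

Lemma decr_neg (f df : R -> R) (x y : R) :
  (forall z, is_derive f z (df z)) -> x < y ->
  (forall z, x <= z <= y -> df z < 0) -> f y < f x.
Proof.
  intros Hd Hxy Hn.
  destruct (MVT_gen f x y df) as [c [Hc Heq]].
  - intros; apply Hd.
  - intros z _. apply continuity_pt_filterlim. apply (ex_derive_continuous f).
    eexists; apply Hd.
  - rewrite Rmin_left in Hc by lra. rewrite Rmax_right in Hc by lra.
    assert (df c < 0) by (apply Hn; lra).
    assert (df c * (y - x) < 0) by (nra).
    lra.
Qed.

Lemma exp_le1 t : t <= 0 -> exp t <= 1.
Proof. intros H. destruct (Req_dec t 0) as [->|Hn]; [rewrite exp_0; lra|].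
  rewrite <- exp_0. left. apply exp_increasing. lra. Qed.
Lemma exp_ge1 t : 0 <= t -> 1 <= exp t.
Proof. intros H. destruct (Req_dec t 0) as [->|Hn]; [rewrite exp_0; lra|].
  rewrite <- exp_0. left. apply exp_increasing. lra. Qed.

Lemma qplus s2 m S r : 0 < s2 -> 0 <= S -> S*S = m^2 + 2*s2*r ->
  s2*((S+m)/s2)^2 = 2*m*((S+m)/s2) + 2*r /\ ((S+m)/s2)*(S-m) = 2*r.
Proof. intros Hs HS HSS. split.
  - field_simplify; try lra. f_equal. nra.
  - field_simplify; try lra. replace (S^2 - m^2) with (2*r*s2) by nra. field. lra.
Qed.

Definition g1f k1 k2 l1 l2 c y0 x := k1*exp(l1*(x-y0)) - k2*exp(-l2*(x-y0)) + c.
Definition d1f k1 k2 l1 l2 y0 x := k1*l1*exp(l1*(x-y0)) + k2*l2*exp(-l2*(x-y0)).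
Definition dd1f k1 k2 l1 l2 y0 x := k1*l1^2*exp(l1*(x-y0)) - k2*l2^2*exp(-l2*(x-y0)).
Definition g2f ga C y0 x := - / ga * exp (- ga * (x - y0)) + C.
Definition d2f ga y0 x := exp (- ga * (x - y0)).
Definition dd2f ga y0 x := - ga * exp (- ga * (x - y0)).

Lemma case2_core (mu sigma r cbar b l1 l2 ga k1 k2 y0 : R)
 (Hs: 0<sigma) (Hr: 0<r) (Hc: 0<cbar) (Hb0 : 0 <= b) (Hb1 : b <= 1)
 (Hl1: 0<l1) (Hl2: 0<l2) (Hga: 0<ga)
 (Q1: sigma^2*l1^2 = 2*r - 2*(mu-b*cbar)*l1)
 (Q2: sigma^2*l2^2 = 2*r + 2*(mu-b*cbar)*l2)
 (Qg: sigma^2*ga^2 = 2*(mu-cbar)*ga + 2*r)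
 (Hk2: 0<k2)
 (Hdiff: k1 - k2 = (1-b)*cbar/r - /ga)
 (Hsum: k1*l1 + k2*l2 = 1)
 (Hy0: 0<y0)
 (Hh: k1*exp(-l1*y0) - k2*exp(l2*y0) + b*cbar/r = 0) :
 good_g mu sigma r cbar b (pw y0 (g1f k1 k2 l1 l2 (b*cbar/r) y0) (g2f ga (cbar/r) y0)) /\
 Derive (pw y0 (g1f k1 k2 l1 l2 (b*cbar/r) y0) (g2f ga (cbar/r) y0)) y0 = 1.
Proof.
  set (g := pw y0 (g1f k1 k2 l1 l2 (b*cbar/r) y0) (g2f ga (cbar/r) y0)).
  set (G1 := pw y0 (d1f k1 k2 l1 l2 y0) (d2f ga y0)).
  set (G2 := pw y0 (dd1f k1 k2 l1 l2 y0) (dd2f ga y0)).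
  assert (Hs2 : 0 < sigma^2) by nra.
  assert (Hd1 : forall x, is_derive (g1f k1 k2 l1 l2 (b*cbar/r) y0) x (d1f k1 k2 l1 l2 y0 x)).
  { intros x. unfold g1f, d1f. auto_derive; auto. unfold Rminus. ring. }
  assert (Hd2 : forall x, is_derive (g2f ga (cbar/r) y0) x (d2f ga y0 x)).
  { intros x. unfold g2f, d2f. auto_derive; auto. unfold Rminus. field. lra. }
  assert (Hdd1 : forall x, is_derive (d1f k1 k2 l1 l2 y0) x (dd1f k1 k2 l1 l2 y0 x)).
  { intros x. unfold dd1f, d1f. auto_derive; auto. unfold Rminus. ring. }
  assert (Hdd2 : forall x, is_derive (d2f ga y0) x (dd2f ga y0 x)).
  { intros x. unfold dd2f, d2f. auto_derive; auto. unfold Rminus. ring. }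
  assert (Hk1 : k1 = k2 + ((1-b)*cbar/r - /ga)) by lra.
  assert (E0 : forall l, exp (l * (y0 - y0)) = 1).
  { intros l. replace (l*(y0-y0)) with 0 by ring. apply exp_0. }
  assert (HD : forall x, is_derive g x (G1 x)).
  { apply glue_derive; auto.
    - unfold g1f, g2f. rewrite !E0. rewrite Hk1. field. split; lra.
    - unfold d1f, d2f. rewrite !E0. lra. }
  assert (Hsq : k1*l1^2 - k2*l2^2 = -ga).
  { apply Rmult_eq_reg_l with (sigma^2); [|lra].
    transitivity (k1*(sigma^2*l1^2) - k2*(sigma^2*l2^2)); [ring|]. rewrite Q1, Q2.
    transitivity (2*r*(k1-k2) - 2*(mu-b*cbar)*(k1*l1+k2*l2)); [ring|].
    rewrite Hdiff, Hsum.
    assert (sigma^2*(-ga) = -(2*(mu-cbar)*ga+2*r)/ga) by (rewrite <- Qg; field; lra).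
    rewrite H. field. split; lra. }
  assert (HDD : forall x, is_derive G1 x (G2 x)).
  { apply glue_derive; auto.
    { unfold d1f, d2f. rewrite !E0. lra. }
    unfold dd1f, dd2f. rewrite !E0. lra. }
  assert (EG1 : Derive g = G1).
  { apply functional_extensionality. intros x. apply is_derive_unique. apply HD. }
  assert (EG2 : Derive G1 = G2).
  { apply functional_extensionality. intros x. apply is_derive_unique. apply HDD. }
  assert (Hneg : forall x, x <= y0 -> dd1f k1 k2 l1 l2 y0 x < 0).
  { intros x Hx. unfold dd1f.
    assert (A1 := exp_le1 (l1*(x-y0)) ltac:(nra)).
    assert (A2 := exp_ge1 (-l2*(x-y0)) ltac:(nra)).
    assert (P1 := exp_pos (l1*(x-y0))).
    destruct (Rle_dec k1 0).
    - assert (k1*l1^2*exp(l1*(x-y0)) <= 0).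
      { assert (0 <= l1^2*exp(l1*(x-y0))) by (apply Rmult_le_pos; [apply pow2_ge_0|lra]).
        assert (0 <= (-k1)*(l1^2*exp(l1*(x-y0)))) by (apply Rmult_le_pos; lra).
        lra. }
      assert (0 < k2*l2^2*exp(-l2*(x-y0))).
      { apply Rmult_lt_0_compat; [apply Rmult_lt_0_compat; [lra|apply pow_lt; lra]| apply exp_pos]. }
      lra.
    - assert (k1*l1^2*exp(l1*(x-y0)) <= k1*l1^2).
      { assert (0 <= k1*l1^2) by (apply Rmult_le_pos; [lra|apply pow2_ge_0]).
        assert (0 <= (k1*l1^2)*(1 - exp(l1*(x-y0)))) by (apply Rmult_le_pos; lra). lra. }
      assert (k2*l2^2 <= k2*l2^2*exp(-l2*(x-y0))).
      { assert (0 <= k2*l2^2) by (apply Rmult_le_pos; [lra|apply pow2_ge_0]).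
        assert (0 <= (k2*l2^2)*(exp(-l2*(x-y0)) - 1)) by (apply Rmult_le_pos; lra). lra. }
      lra. }
  assert (Hd1dec : forall x y, x < y -> y <= y0 -> d1f k1 k2 l1 l2 y0 y < d1f k1 k2 l1 l2 y0 x).
  { intros x y Hxy Hy. apply (decr_neg _ _ x y Hdd1 Hxy). intros z Hz. apply Hneg. lra. }
  assert (Hd1y0 : d1f k1 k2 l1 l2 y0 y0 = 1) by (unfold d1f; rewrite !E0; lra).
  assert (Hd1ge : forall x, x <= y0 -> 1 <= d1f k1 k2 l1 l2 y0 x).
  { intros x Hx. destruct (Req_dec x y0) as [->|Hne]; [lra|].
    left. rewrite <- Hd1y0. apply Hd1dec; lra. }
  assert (Hd2x : forall x, y0 < x -> 0 < d2f ga y0 x < 1).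
  { intros x Hx. unfold d2f. split; [apply exp_pos|]. rewrite <- exp_0.
    apply exp_increasing. nra. }
  assert (HG1pos : forall x, 0 < G1 x).
  { intros x. unfold G1, pw. destruct (Rle_dec x y0).
    - specialize (Hd1ge x r0). lra.
    - apply Hd2x. lra. }
  assert (HG1dec : forall x y, x < y -> G1 y < G1 x).
  { intros x y Hxy. unfold G1, pw. destruct (Rle_dec y y0); destruct (Rle_dec x y0).
    - apply Hd1dec; lra.
    - lra.
    - specialize (Hd1ge x r0). specialize (Hd2x y ltac:(lra)). lra.
    - unfold d2f. apply exp_increasing. nra. }
  assert (Hginc : forall x y, x < y -> g x < g y).
  { intros x y Hxy.
    assert (- g y < - g x); [|lra].
    apply (decr_neg (fun z => - g z) (fun z => - G1 z) x y); auto.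
    - intros z. exact (is_derive_opp g z (G1 z) (HD z)).
    - intros z _. specialize (HG1pos z). lra. }
  assert (Hg0 : g 0 = 0).
  { unfold g, pw. destruct (Rle_dec 0 y0) as [_|C]; [|lra].
    unfold g1f. replace (l1*(0-y0)) with (-l1*y0) by ring.
    replace (-l2*(0-y0)) with (l2*y0) by ring. exact Hh. }
  assert (Hgy0 : g y0 = cbar/r - /ga).
  { unfold g, pw. destruct (Rle_dec y0 y0) as [_|C]; [|lra].
    unfold g1f. rewrite !E0. rewrite Hk1. field. lra. }
  assert (Hinvga : 0 < /ga) by (apply Rinv_0_lt_compat; lra).
  split.
  2:{ rewrite EG1. unfold G1, pw. destruct (Rle_dec y0 y0); [exact Hd1y0|lra]. }
  unfold good_g. rewrite EG1.
  split; [|split; [|split; [exact Hg0|split; [|split]]]].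
  - intros x _. split; [eexists; apply HD|]. rewrite EG1. split; [eexists; apply HDD|].
    rewrite EG2. apply continuity_pt_filterlim. apply glue_cont.
    + intros z. apply continuity_pt_filterlim. apply (ex_derive_continuous (dd1f k1 k2 l1 l2 y0)).
      unfold dd1f. auto_derive. auto.
    + intros z. apply continuity_pt_filterlim. apply (ex_derive_continuous (dd2f ga y0)).
      unfold dd2f. auto_derive. auto.
    + unfold dd1f, dd2f. rewrite !E0. lra.
  - intros x Hx. unfold opL, opT. rewrite EG1, EG2.
    unfold G1, G2, g, pw. destruct (Rle_dec x y0).
    + rewrite Rmax_left by (specialize (Hd1ge x r0); lra).
      unfold g1f, d1f, dd1f.
      set (E1 := exp (l1*(x-y0))). set (E2 := exp (-l2*(x-y0))).
      assert (Z1 : r - /2*(sigma^2*l1^2) - (mu-b*cbar)*l1 = 0) by (rewrite Q1; field).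
      assert (Z2 : r - /2*(sigma^2*l2^2) + (mu-b*cbar)*l2 = 0) by (rewrite Q2; field).
      transitivity (k1*E1*(r - /2*(sigma^2*l1^2) - (mu-b*cbar)*l1)
                    - k2*E2*(r - /2*(sigma^2*l2^2) + (mu-b*cbar)*l2)).
      * field. lra.
      * rewrite Z1, Z2. ring.
    + rewrite Rmax_right by (specialize (Hd2x x ltac:(lra)); lra).
      unfold g2f, d2f, dd2f.
      set (E := exp (-ga*(x-y0))).
      assert (Zg : /2*sigma^2*ga - (mu-cbar) - r/ga = 0).
      { apply Rmult_eq_reg_l with ga; [|lra].
        transitivity (/2*(sigma^2*ga^2) - (mu-cbar)*ga - r); [field; lra|].
        rewrite Qg. field. }
      transitivity (E*(/2*sigma^2*ga - (mu-cbar) - r/ga)).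
      * field. lra.
      * rewrite Zg. ring.
  - intros x Hx. split.
    + rewrite <- Hg0. destruct (Req_dec x 0) as [->|Hne]; [lra|]. left; apply Hginc; lra.
    + destruct (Rle_dec x y0).
      * assert (g x <= g y0).
        { destruct (Req_dec x y0) as [->|Hne]; [lra|]. left; apply Hginc; lra. }
        lra.
      * unfold g, pw. destruct (Rle_dec x y0); [lra|]. unfold g2f.
        assert (0 < /ga * exp (-ga*(x-y0))) by (apply Rmult_lt_0_compat; [lra|apply exp_pos]).
        lra.
  - intros x Hx. split; [left; apply HG1pos|].
    destruct (Req_dec x 0) as [->|Hne]; [lra|]. left; apply HG1dec; lra.
  - intros x y Hx Hxy. apply HG1dec; auto.
Qed.

Lemma exp_mono_le x y : x <= y -> exp x <= exp y.
Proof. intros H. destruct (Req_dec x y) as [->|Hn]; [lra|]. left; apply exp_increasing; lra. Qed.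

Lemma case1_core (mu sigma r cbar b ga : R)
 (Hs: 0<sigma) (Hr: 0<r) (Hc: 0<cbar) (Hb0 : 0 <= b) (Hb1 : b <= 1) (Hga: 0<ga)
 (Qg: sigma^2*ga^2 = 2*(mu-cbar)*ga + 2*r) (Hcg : cbar*ga <= r) :
 good_g mu sigma r cbar b (fun x => cbar / r * (1 - exp (- ga * x))).
Proof.
  set (g := fun x => cbar / r * (1 - exp (- ga * x))).
  set (G1 := fun x => cbar / r * ga * exp (- ga * x)).
  set (G2 := fun x => - (cbar / r * ga^2 * exp (- ga * x))).
  assert (HD : forall x, is_derive g x (G1 x)).
  { intros x. unfold g, G1. auto_derive; auto. ring. }
  assert (HDD : forall x, is_derive G1 x (G2 x)).
  { intros x. unfold G2, G1. auto_derive; auto. ring. }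
  assert (EG1 : Derive g = G1).
  { apply functional_extensionality. intros x. apply is_derive_unique. apply HD. }
  assert (EG2 : Derive G1 = G2).
  { apply functional_extensionality. intros x. apply is_derive_unique. apply HDD. }
  assert (Hcr : 0 < cbar / r) by (apply Rdiv_lt_0_compat; lra).
  assert (HG1dec : forall x y, x < y -> G1 y < G1 x).
  { intros x y Hxy. unfold G1. apply Rmult_lt_compat_l; [nra|]. apply exp_increasing. nra. }
  assert (HG1pos : forall x, 0 < G1 x).
  { intros x. unfold G1. assert (0 < exp (-ga*x)) by apply exp_pos. apply Rmult_lt_0_compat; [apply Rmult_lt_0_compat|]; lra. }
  assert (HG10 : G1 0 <= 1).
  { unfold G1. replace (-ga*0) with 0 by ring. rewrite exp_0.
    apply Rmult_le_reg_l with r; [lra|]. field_simplify; lra. }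
  unfold good_g. rewrite EG1.
  split; [|split; [|split; [|split; [|split]]]].
  - intros x _. split; [eexists; apply HD|]. rewrite EG1. split; [eexists; apply HDD|].
    rewrite EG2.
    apply (ex_derive_continuous G2). unfold G2. auto_derive. auto.
  - intros x Hx. unfold opL, opT. rewrite EG1, EG2.
    assert (G1 x <= 1).
    { destruct (Req_dec x 0) as [->|Hne]; [lra|]. specialize (HG1dec 0 x ltac:(lra)). lra. }
    rewrite Rmax_right by lra.
    unfold g, G1, G2. set (E := exp (-ga*x)).
    assert (Zg : /2*sigma^2*ga^2 - (mu-cbar)*ga - r = 0) by lra.
    transitivity (cbar/r*E*(/2*sigma^2*ga^2 - (mu-cbar)*ga - r)).
    + field. lra.
    + rewrite Zg. ring.
  - unfold g. replace (-ga*0) with 0 by ring. rewrite exp_0. ring.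
  - intros x Hx. unfold g. assert (0 < exp (-ga*x)) by apply exp_pos.
    assert (exp (-ga*x) <= 1) by (apply exp_le1; nra). split; nra.
  - intros x Hx. split; [left; apply HG1pos|].
    destruct (Req_dec x 0) as [->|Hne]; [lra|]. left; apply HG1dec; lra.
  - intros x y Hx Hxy. apply HG1dec; auto.
Qed.

Theorem lemma3p3 (mu sigma r cbar b : R)
  (Hsigma : 0 < sigma) (Hr : 0 < r) (Hc0 : 0 < cbar) (Hcmu : cbar <= mu)
  (Hb0 : 0 <= b) (Hb1 : b <= 1) :
  (2 * mu * cbar <= sigma^2 * r ->
     good_g mu sigma r cbar b (g_case1 mu sigma r cbar)) /\
  (sigma^2 * r < 2 * mu * cbar ->
     (exists! y0, 0 < y0 /\ y0_eq mu sigma r cbar b y0) /\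
     (forall y0, 0 < y0 -> y0_eq mu sigma r cbar b y0 ->
        good_g mu sigma r cbar b (g_case2 mu sigma r cbar b y0) /\
        Derive (g_case2 mu sigma r cbar b y0) y0 = 1)).
Proof.
  assert (Hs2 : 0 < sigma^2) by nra.
  set (m1 := mu - cbar). set (mb := mu - b*cbar).
  set (S1 := sqrt (m1^2 + 2*sigma^2*r)). set (Sb := sqrt (mb^2 + 2*sigma^2*r)).
  assert (HS1 : S1*S1 = m1^2 + 2*sigma^2*r) by (apply sqrt_sqrt; nra).
  assert (HSb : Sb*Sb = mb^2 + 2*sigma^2*r) by (apply sqrt_sqrt; nra).
  assert (HS1p : 0 <= S1) by apply sqrt_pos.
  assert (HSbp : 0 <= Sb) by apply sqrt_pos.
  assert (HS1a : -m1 < S1 /\ m1 < S1) by (split; nra).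
  assert (HSba : -mb < Sb /\ mb < Sb) by (split; nra).
  set (ga := gam mu sigma r cbar).
  assert (Ega : ga = (S1 + m1)/sigma^2) by reflexivity.
  set (l1 := lam1 mu sigma r cbar b).
  assert (El1 : l1 = (Sb + - mb)/sigma^2) by reflexivity.
  set (l2 := lam2 mu sigma r cbar b).
  assert (El2 : l2 = (Sb + mb)/sigma^2) by reflexivity.
  destruct (qplus (sigma^2) m1 S1 r Hs2 HS1p HS1) as [Qg Pg]. rewrite <- Ega in Qg, Pg.
  destruct (qplus (sigma^2) (-mb) Sb r Hs2 HSbp ltac:(rewrite HSb; ring)) as [Q1 P1].
  rewrite <- El1 in Q1, P1.
  destruct (qplus (sigma^2) mb Sb r Hs2 HSbp HSb) as [Q2 P2]. rewrite <- El2 in Q2, P2.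
  assert (Hga : 0 < ga) by (rewrite Ega; apply Rdiv_lt_0_compat; lra).
  assert (Hl1 : 0 < l1) by (rewrite El1; apply Rdiv_lt_0_compat; lra).
  assert (Hl2 : 0 < l2) by (rewrite El2; apply Rdiv_lt_0_compat; lra).
  assert (Hcga : cbar*ga*sigma^2 = cbar*(S1+m1)) by (rewrite Ega; field; lra).
  assert (Hkey : (cbar*S1)^2 - (r*sigma^2 - cbar*m1)^2 = r*sigma^2*(2*mu*cbar - sigma^2*r)).
  { replace ((cbar*S1)^2) with (cbar^2*(S1*S1)) by ring. rewrite HS1. unfold m1. ring. }
  split.
  - intros Hcase.
    apply case1_core; auto.
    change (cbar * ga <= r).
    assert (HT : 0 <= r*sigma^2 - cbar*m1).
    { unfold m1. clear - Hcase Hc0 Hcmu. assert (0 <= cbar*mu) by nra. nra. }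
    assert (cbar*S1 <= r*sigma^2 - cbar*m1).
    { assert (HcS : 0 <= cbar*S1) by (apply Rmult_le_pos; lra).
      assert (Hk : (cbar*S1)^2 - (r*sigma^2 - cbar*m1)^2 <= 0).
      { rewrite Hkey. assert (Hrs : 0 < r*sigma^2) by nra. clear - Hrs Hcase.
        assert (0 <= (sigma^2*r - 2*mu*cbar)) by lra. nra. }
      clear - Hk HT HcS. nra. }
    apply Rmult_le_reg_r with (sigma^2); [lra|]. rewrite Hcga. lra.
  - intros Hcase.
    assert (Hcg : r < cbar*ga).
    { assert (HcS : 0 <= cbar*S1) by (apply Rmult_le_pos; lra).
      assert (cbar*S1 > r*sigma^2 - cbar*m1).
      { destruct (Rle_dec 0 (r*sigma^2 - cbar*m1)) as [HT|HT]; [|lra].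
        assert (Hk : (cbar*S1)^2 - (r*sigma^2 - cbar*m1)^2 > 0).
        { rewrite Hkey. assert (Hrs : 0 < r*sigma^2) by nra. clear - Hrs Hcase.
          assert (0 < (2*mu*cbar - sigma^2*r)) by lra. nra. }
        clear - Hk HT HcS. nra. }
      apply Rmult_lt_reg_r with (sigma^2); [lra|]. rewrite Hcga. lra. }
    set (A := (1-b)*cbar/r - /ga).
    set (k1 := kk1 mu sigma r cbar b). set (k2 := kk2 mu sigma r cbar b).
    assert (Ek1 : k1 = /(l1+l2)*(1+l2*A)) by reflexivity.
    assert (Ek2 : k2 = /(l1+l2)*(1-l1*A)) by reflexivity.
    assert (Hdiff : k1 - k2 = A) by (rewrite Ek1, Ek2; field; lra).
    assert (Hsum : k1*l1 + k2*l2 = 1) by (rewrite Ek1, Ek2; field; lra).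
    assert (Hrg : 2*r/ga = S1 - m1) by (rewrite <- Pg; field; lra).
    assert (HX : 2*r*(1 - l1*A) = l1*(Sb + S1 - (1-b)*cbar)).
    { transitivity (2*r - 2*l1*(1-b)*cbar + l1*(2*r/ga)); [unfold A; field; split; lra|].
      rewrite Hrg. rewrite <- P1. unfold m1, mb. ring. }
    assert (Hk2 : 0 < k2).
    { rewrite Ek2. apply Rmult_lt_0_compat; [apply Rinv_0_lt_compat; lra|].
      assert (0 < Sb + S1 - (1-b)*cbar) by (unfold mb in HSba; nra).
      assert (0 < 2*r*(1 - l1*A)) by (rewrite HX; apply Rmult_lt_0_compat; lra).
      nra. }
    set (h := fun y => k1*exp(-l1*y) - k2*exp(l2*y) + b*cbar/r).
    set (hd := fun y => -k1*l1*exp(-l1*y) - k2*l2*exp(l2*y)).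
    assert (Hhd : forall y, is_derive h y (hd y)).
    { intros y. unfold h, hd. auto_derive; auto. ring. }
    assert (Hh0 : 0 < h 0).
    { unfold h. replace (-l1*0) with 0 by ring. replace (l2*0) with 0 by ring. rewrite exp_0.
      replace (k1*1 - k2*1 + b*cbar/r) with ((cbar*ga - r)/(r*ga)).
      { apply Rdiv_lt_0_compat; nra. }
      replace k1 with (k2 + A) by lra. unfold A. field. split; lra. }
    assert (Hcont : forall y, continuity_pt h y).
    { intros y. apply continuity_pt_filterlim. apply (ex_derive_continuous h). eexists; apply Hhd. }
    split.
    +
      set (M := (Rabs k1 + b*cbar/r)/k2).
      assert (HM : 0 <= M).
      { unfold M. apply Rmult_le_pos; [|left; apply Rinv_0_lt_compat; lra].
        assert (0 <= Rabs k1) by apply Rabs_pos.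
        assert (0 <= b*cbar/r) by (apply Rmult_le_pos; [nra|left; apply Rinv_0_lt_compat; lra]). lra. }
      set (Y := (M+1)/l2).
      assert (HY : 0 < Y) by (unfold Y; apply Rdiv_lt_0_compat; lra).
      assert (HhY : h Y < 0).
      { unfold h.
        assert (E1 : exp (-l1*Y) <= 1) by (apply exp_le1; nra).
        assert (E1p : 0 < exp (-l1*Y)) by apply exp_pos.
        assert (T1 : k1*exp(-l1*Y) <= Rabs k1).
        { assert (k1 <= Rabs k1) by apply Rle_abs. assert (0 <= Rabs k1) by apply Rabs_pos. nra. }
        assert (E2 : 1 + l2*Y < exp (l2*Y)) by (apply exp_ineq1; nra).
        replace (l2*Y) with (M+1) in E2 by (unfold Y; field; lra).
        assert (T2 : k2*(1 + (M+1)) < k2*exp(l2*Y)).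
        { apply Rmult_lt_compat_l; auto. replace (l2*Y) with (M+1) by (unfold Y; field; lra). auto. }
        assert (k2*M = Rabs k1 + b*cbar/r) by (unfold M; field; lra).
        nra. }
      destruct (IVT (fun y => - h y) 0 Y) as [z [Hz Hzh]].
      { intros y. apply continuity_pt_opp. apply Hcont. }
      { exact HY. } { lra. } { lra. }
      assert (Hz0 : h z = 0) by lra.
      assert (Hzp : 0 < z).
      { destruct (Req_dec z 0) as [->|Hne]; [lra|lra]. }
      assert (Huniq : forall a c, 0 < a -> a < c -> h a = 0 -> h c = 0 -> False).
      { intros a c Ha Hac Hha Hhc.
        destruct (MVT_gen h a c hd) as [t [Ht Hteq]].
        { intros; apply Hhd. } { intros; apply Hcont. }
        rewrite Rmin_left in Ht by lra. rewrite Rmax_right in Ht by lra.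
        assert (Hhdt : hd t = 0).
        { rewrite Hha, Hhc in Hteq. assert (hd t * (c - a) = 0) by lra.
          apply Rmult_integral in H. destruct H; [auto|lra]. }
        unfold hd in Hhdt.
        assert (P1t : 0 < exp(-l1*t)) by apply exp_pos.
        assert (P2t : 0 < exp(l2*t)) by apply exp_pos.
        assert (0 < k2*l2*exp(l2*t)) by (apply Rmult_lt_0_compat; [nra|lra]).
        destruct (Rle_dec 0 k1) as [Hk1p|Hk1n].
        - assert (0 <= k1*l1*exp(-l1*t)) by (apply Rmult_le_pos; [nra|lra]). lra.
        - destruct (MVT_gen h 0 a hd) as [s [Hs Hseq]].
          { intros; apply Hhd. } { intros; apply Hcont. }
          rewrite Rmin_left in Hs by lra. rewrite Rmax_right in Hs by lra.
          assert (Hhds : hd s < 0).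
          { rewrite Hha in Hseq. destruct (Rlt_dec (hd s) 0); auto. nra. }
          unfold hd in Hhds.
          assert (exp(-l1*t) <= exp(-l1*s)) by (apply exp_mono_le; nra).
          assert (exp(l2*s) <= exp(l2*t)) by (apply exp_mono_le; nra).
          assert (-k1*l1*exp(-l1*t) <= -k1*l1*exp(-l1*s)).
          { apply Rmult_le_compat_l; [nra|lra]. }
          assert (k2*l2*exp(l2*s) <= k2*l2*exp(l2*t)).
          { apply Rmult_le_compat_l; [nra|lra]. }
          lra. }
      exists z. split; [split; [exact Hzp| exact Hz0]|].
      intros y' [Hy' Heq']. change (h y' = 0) in Heq'.
      destruct (Rtotal_order z y') as [Hlt|[Heq|Hgt]]; auto.
      * exfalso; apply (Huniq z y'); auto.
      * exfalso; apply (Huniq y' z); auto.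
    + intros y0 Hy0 Heq.
      assert (E : g_case2 mu sigma r cbar b y0 =
        pw y0 (g1f k1 k2 l1 l2 (b*cbar/r) y0) (g2f ga (cbar/r) y0)) by reflexivity.
      rewrite E.
      apply (case2_core mu sigma r cbar b l1 l2 ga k1 k2 y0); auto.
      * rewrite Q1. unfold mb. ring.
      * rewrite Q2. unfold mb. ring.
Qed.
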